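(* For every integer $d\ge1$ there is a constant $c(d)>0$ depending only on $d$ such that for every integer $t\ge2$, $VC(\mathcal{G}(t))\le c(d)\cdot t\ln t$.
   Context: $\mathcal{T}(t)$ is the set of partitions of $[0,1]^d$ with exactly $t$ cells that arise as the leaves of a Mondrian tree, i.e. of a binary tree obtained by starting from $[0,1]^d$ and repeatedly splitting a leaf cell $\mathcal{C}$ along an axis-aligned hyperplane into $\{x\in\mathcal{C}:x_J\le s\}$ and $\{x\in\mathcal{C}:x_J>s\}$. $\mathcal{G}(t)=\{\sum_{j=1}^t c_j\mathbb{I}(x\in\mathcal{C}_j):c_j\in\mathbb{R},\ \{\mathcal{C}_1,\dots,\mathcal{C}_t\}\in\mathcal{T}(t)\}$. For a real function $f$ on $\mathcal{X}$, its subgraph is $\{(x,y)\in\mathcal{X}\times\mathbb{R}:f(x)>y\}$; a collection of sets shatters a finite set of points if every subset of it can be written as its intersection with a member of the collection; the VC dimension $VC(\mathcal{F})$ of a function class $\mathcal{F}$ is the largest size of a set of points in $\mathcal{X}\times\mathbb{R}$ shattered by the subgraphs of the functions in $\mathcal{F}$. *)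

(* Defs.v *)
From Stdlib Require Import Reals List ClassicalEpsilon.
From mathcomp Require Import ssreflect ssrbool ssrnat eqtype fintype.
Import ListNotations.
Open Scope R_scope.

Definition pt (d : nat) := 'I_d -> R.

Definition cell (d : nat) := pt d -> Prop.

Definition unit_cube (d : nat) : cell d := fun x => forall i : 'I_d, 0 <= x i <= 1.

Definition split_le d (C : cell d) (J : 'I_d) (s : R) : cell d :=
  fun x => C x /\ x J <= s.
Definition split_gt d (C : cell d) (J : 'I_d) (s : R) : cell d :=
  fun x => C x /\ s < x J.

(* Leaves of Mondrian trees: start from [0,1]^d and repeatedly replace a
   leaf C by its two children {x in C : x_J <= s}, {x in C : x_J > s};
   children are required to be nonempty so that the leaves form a genuine
   partition (with every cell nonempty). *)
Inductive mondrian (d : nat) : list (cell d) -> Prop :=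
| mondrian_root : mondrian d [unit_cube d]
| mondrian_split (P1 P2 : list (cell d)) (C : cell d) (J : 'I_d) (s : R) :
    mondrian d (P1 ++ C :: P2) ->
    (exists x, split_le d C J s x) ->
    (exists x, split_gt d C J s x) ->
    mondrian d (P1 ++ split_le d C J s :: split_gt d C J s :: P2).

Definition mondrian_parts (d t : nat) (P : list (cell d)) : Prop :=
  mondrian d P /\ length P = t.

Definition ind d (C : cell d) (x : pt d) : R :=
  if excluded_middle_informative (C x) then 1 else 0.

Fixpoint pcsum d (P : list (cell d)) (c : list R) (x : pt d) : R :=
  match P, c with
  | C :: P', a :: c' => a * ind d C x + pcsum d P' c' x
  | _, _ => 0
  end.

Definition G (d t : nat) (g : pt d -> R) : Prop :=
  exists (P : list (cell d)) (c : list R),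
    mondrian_parts d t P /\ length c = t /\ g = pcsum d P c.

Definition shatters d (F : (pt d -> R) -> Prop) (S : list (pt d * R)) : Prop :=
  forall T : pt d * R -> Prop,
    exists f, F f /\ forall p, In p S -> (T p <-> f (fst p) > snd p).

Definition VC_le d (F : (pt d -> R) -> Prop) (B : R) : Prop :=
  forall S : list (pt d * R),
    NoDup S -> (forall p, In p S -> unit_cube d (fst p)) ->
    shatters d F S -> INR (length S) <= B.

(* Main.v *)
Require Import Defs.
From Stdlib Require Import Reals Lra Lia List Classical ClassicalEpsilon.
From Stdlib Require FinFun.
Import ListNotations.
Open Scope R_scope.
Open Scope bool_scope.

Definition mem d (C : cell d) (x : pt d) : bool :=
  if excluded_middle_informative (C x) then true else false.

Definition lepat (o : option R) (v : R) : bool :=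
  match o with None => false | Some b => if Rle_dec v b then true else false end.

Lemma thr_exists (P : R -> Prop) (Pdown : forall v w, v <= w -> P w -> P v) (L : list R) :
  exists o, (o = None \/ exists b, o = Some b /\ In b L) /\
    forall v, In v L -> (P v <-> lepat o v = true).
Proof.
  induction L as [|a L IH].
  - exists None. split; [left; reflexivity| intros v []].
  - destruct IH as [o [Ho HL]].
    destruct (classic (P a)) as [Pa|nPa].
    + destruct Ho as [-> | [b [-> Hb]]].
      * exists (Some a). split. { right. exists a. split; [reflexivity| left; reflexivity]. }
        intros v [->|Hv]; simpl.
        -- destruct (Rle_dec v v); [tauto| lra].
        -- destruct (Rle_dec v a) as [h|h]; split; intro H; try discriminate; try reflexivity.
           ++ exfalso. apply (Pdown v a h) in Pa. apply (proj1 (HL v Hv)) in Pa. discriminate.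
           ++ exfalso. apply (proj1 (HL v Hv)) in H. discriminate.
      * assert (Pb : P b). { apply (HL b Hb). simpl. destruct (Rle_dec b b); [reflexivity|lra]. }
        destruct (Rle_dec a b) as [hab|hab].
        -- exists (Some b). split. { right. exists b. split; [reflexivity| right; exact Hb]. }
           intros v [->|Hv].
           ++ simpl. destruct (Rle_dec v b); [tauto|lra].
           ++ apply HL; exact Hv.
        -- exists (Some a). split. { right. exists a. split; [reflexivity| left; reflexivity]. }
           intros v [->|Hv].
           ++ simpl. destruct (Rle_dec v v); [tauto|lra].
           ++ specialize (HL v Hv). simpl in HL |- *.
              destruct (Rle_dec v b) as [h1|h1]; destruct (Rle_dec v a) as [h2|h2]; try tauto; try lra.
              split; intro H; [reflexivity| ].
              exact (Pdown v a h2 Pa).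
    + exists o. split.
      * destruct Ho as [-> | [b [-> Hb]]]; [left; reflexivity| right; exists b; split; [reflexivity| right; exact Hb]].
      * intros v [->|Hv]; [|apply HL; exact Hv].
        split; intro H; [contradiction|].
        exfalso. destruct Ho as [-> | [b [-> Hb]]]; [discriminate|].
        simpl in H. destruct (Rle_dec v b) as [h|h]; [|discriminate].
        assert (Pb : P b). { apply (HL b Hb). simpl. destruct (Rle_dec b b); [reflexivity|lra]. }
        exact (nPa (Pdown v b h Pb)).
Qed.
Fixpoint cnt d (P : list (cell d)) (x : pt d) : nat :=
  match P with [] => 0%nat | C :: P' => ((if mem d C x then 1 else 0) + cnt d P' x)%nat end.

Lemma cnt_app d A B x : cnt d (A ++ B) x = (cnt d A x + cnt d B x)%nat.
Proof. induction A; simpl; [reflexivity| rewrite IHA; lia]. Qed.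

Lemma mem_split d C J s x :
  ((if mem d (split_le d C J s) x then 1 else 0) + (if mem d (split_gt d C J s) x then 1 else 0))%nat
  = (if mem d C x then 1 else 0)%nat.
Proof.
  unfold mem, split_le, split_gt.
  destruct (excluded_middle_informative (C x /\ x J <= s));
  destruct (excluded_middle_informative (C x /\ s < x J));
  destruct (excluded_middle_informative (C x)); try reflexivity; exfalso;
  destruct (Rle_dec (x J) s); intuition lra.
Qed.

Lemma mondrian_cnt d P : mondrian d P -> forall x, unit_cube d x -> cnt d P x = 1%nat.
Proof.
  induction 1; intros x Hx.
  - simpl. unfold mem. destruct (excluded_middle_informative (unit_cube d x)); [reflexivity| contradiction].
  - specialize (IHmondrian x Hx). rewrite cnt_app in IHmondrian |- *. simpl in IHmondrian |- *.
    pose proof (mem_split d C J s x). lia.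
Qed.

Definition Rltb (a b : R) : bool := if Rlt_dec a b then true else false.

Lemma ind_mem d C x : Defs.ind d C x = if mem d C x then 1 else 0.
Proof. unfold Defs.ind, mem. destruct (excluded_middle_informative (C x)); reflexivity. Qed.

Lemma pcsum_cnt0 d P c x : cnt d P x = 0%nat ->
  pcsum d P c x = 0 /\ existsb (fun Ca => mem d (fst Ca) x && Rltb (snd Ca) (snd Ca)) (combine P c) = false.
Abort.

Lemma pcsum_cnt0 d P c x y : cnt d P x = 0%nat ->
  pcsum d P c x = 0 /\ existsb (fun Ca : cell d * R => mem d (fst Ca) x && Rltb y (snd Ca)) (combine P c) = false.
Proof.
  revert c; induction P as [|C P IH]; intros c H; [destruct c; split; reflexivity|].
  simpl in H. destruct (mem d C x) eqn:E; [lia|].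
  destruct c as [|a c]; [split; reflexivity|]. simpl.
  destruct (IH c H) as [H1 H2]. rewrite ind_mem, E, H1, H2. split; [ring| reflexivity].
Qed.

Lemma pcsum_cnt1 d P c x y : length P = length c -> cnt d P x = 1%nat ->
  (pcsum d P c x > y <-> existsb (fun Ca : cell d * R => mem d (fst Ca) x && Rltb y (snd Ca)) (combine P c) = true).
Proof.
  revert c; induction P as [|C P IH]; intros c Hl H; [discriminate|].
  destruct c as [|a c]; [discriminate|]. simpl in Hl, H |- *.
  rewrite ind_mem. destruct (mem d C x) eqn:E; simpl.
  - destruct (pcsum_cnt0 d P c x y) as [H1 H2]; [lia|]. rewrite H1, H2, Bool.orb_false_r.
    unfold Rltb. destruct (Rlt_dec y a); split; intro; try reflexivity; try discriminate; lra.
  - rewrite <- (IH c) by lia. replace (a * 0 + pcsum d P c x) with (pcsum d P c x) by ring. tauto.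
Qed.

Definition p0 d : pt d * R := (fun _ => 0, 0).
Definition xi d (L : list (pt d * R)) i := fst (nth i L (p0 d)).
Definition Rc d L (C : cell d) : list bool := map (fun i => mem d C (xi d L i)) (seq 0 (length L)).
Definition sple d L J o (r : list bool) : list bool :=
  map (fun i => nth i r false && lepat o (xi d L i J)) (seq 0 (length L)).
Definition spgt d L J o (r : list bool) : list bool :=
  map (fun i => nth i r false && negb (lepat o (xi d L i J))) (seq 0 (length L)).
Definition splitAt d L (Q : list (list bool)) p J o :=
  firstn p Q ++ sple d L J o (nth p Q []) :: spgt d L J o (nth p Q []) :: skipn (S p) Q.
Definition thr d (L : list (pt d * R)) (J : fintype.ordinal d) : list (option R) :=
  None :: map (fun q => Some (fst q J)) L.

Fixpoint penum d L (js : list (fintype.ordinal d)) (k : nat) : list (list (list bool)) :=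
  match k with
  | O => [[Rc d L (unit_cube d)]]
  | S k' => flat_map (fun Q => flat_map (fun p => flat_map (fun J =>
              map (fun o => splitAt d L Q p J o) (thr d L J)) js) (seq 0 k)) (penum d L js k')
  end.

Lemma nth_map_seq (f : nat -> bool) n i : (i < n)%nat -> nth i (map f (seq 0 n)) false = f i.
Proof.
  intro H. rewrite nth_indep with (d' := f 0%nat) by (rewrite length_map, length_seq; lia).
  rewrite map_nth, seq_nth by lia. reflexivity.
Qed.

Lemma splitAt_app d L A r B J o :
  splitAt d L (A ++ r :: B) (length A) J o = A ++ sple d L J o r :: spgt d L J o r :: B.
Proof.
  unfold splitAt. induction A as [|a A IH]; [reflexivity|].
  simpl. f_equal. exact IH.
Qed.

Lemma Rc_split d L C J s o :
  (forall v, In v (map (fun q => fst q J) L) -> (v <= s <-> lepat o v = true)) ->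
  Rc d L (split_le d C J s) = sple d L J o (Rc d L C) /\
  Rc d L (split_gt d C J s) = spgt d L J o (Rc d L C).
Proof.
  intro H. unfold Rc, sple, spgt. split; apply map_ext_in; intros i Hi;
  apply in_seq in Hi; rewrite nth_map_seq by lia;
  assert (Hv : In (xi d L i J) (map (fun q => fst q J) L))
    by (unfold xi; apply (in_map (fun q : pt d * R => fst q J)); apply nth_In; lia);
  specialize (H _ Hv); unfold mem, split_le, split_gt;
  destruct (excluded_middle_informative _) as [h1|h1];
  destruct (excluded_middle_informative (C (xi d L i))) as [h2|h2];
  destruct (lepat o (xi d L i J)); simpl; try reflexivity; exfalso; intuition (try lra; try discriminate).
Qed.

Lemma mondrian_penum d L js P : (forall J, In J js) -> mondrian d P ->
  (1 <= length P)%nat /\ In (map (Rc d L) P) (penum d L js (pred (length P))).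
Proof.
  intro Hjs. induction 1 as [|P1 P2 C J s HP [Hl IH] _ _].
  - simpl. split; [lia| left; reflexivity].
  - rewrite length_app in Hl, IH |- *. simpl in Hl, IH |- *. split; [lia|].
    replace (pred (length P1 + S (S (length P2)))) with (S (pred (length P1 + S (length P2)))) by lia.
    cbn [penum]. apply in_flat_map. exists (map (Rc d L) (P1 ++ C :: P2)). split; [exact IH|].
    apply in_flat_map. exists (length P1). split; [apply in_seq; lia|].
    apply in_flat_map. exists J. split; [apply Hjs|].
    destruct (thr_exists (fun v => v <= s) (fun v w h1 h2 => Rle_trans _ _ _ h1 h2)
               (map (fun q => fst q J) L)) as [o [Ho HL]].
    destruct (Rc_split d L C J s o HL) as [E1 E2].
    apply in_map_iff. exists o. split.
    + rewrite !map_app. simpl. rewrite <- (length_map (Rc d L) P1), splitAt_app, E1, E2. reflexivity.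
    + unfold thr. destruct Ho as [->|[b [-> Hb]]]; [left; reflexivity| right].
      apply in_map_iff in Hb. destruct Hb as [q [<- Hq]].
      apply (in_map (fun q : pt d * R => Some (fst q J))). exact Hq.
Qed.

Fixpoint allw {X} (A : list X) (k : nat) : list (list X) :=
  match k with O => [[]] | S k' => flat_map (fun a => map (cons a) (allw A k')) A end.

Lemma flat_map_len {X Y} (f : X -> list Y) l m :
  (forall x, In x l -> (length (f x) <= m)%nat) -> (length (flat_map f l) <= length l * m)%nat.
Proof.
  induction l as [|a l IH]; intro H; simpl; [lia|].
  rewrite length_app. pose proof (H a (or_introl eq_refl)) as Ha.
  assert (length (flat_map f l) <= length l * m)%nat by (apply IH; intros x Hx; apply H; right; assumption).
  lia.
Qed.

Lemma allw_len {X} (A : list X) k : (length (allw A k) <= length A ^ k)%nat.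
Proof.
  induction k; simpl; [lia|].
  eapply Nat.le_trans. { apply (flat_map_len _ _ (length A ^ k)). intros. rewrite length_map. exact IHk. }
  lia.
Qed.

Lemma allw_in {X} (A : list X) w : (forall x, In x w -> In x A) -> In w (allw A (length w)).
Proof.
  induction w as [|a w IH]; intro H; simpl; [left; reflexivity|].
  apply in_flat_map. exists a. split; [apply H; left; reflexivity|].
  apply in_map. apply IH. intros; apply H; right; assumption.
Qed.

Lemma allw_bool_nodup k : NoDup (allw [true; false] k).
Proof.
  induction k; simpl; [constructor; [intros []|constructor]|].
  rewrite app_nil_r. apply NoDup_app.
  - apply FinFun.Injective_map_NoDup; [intros x y H; injection H; auto| exact IHk].
  - apply FinFun.Injective_map_NoDup; [intros x y H; injection H; auto| exact IHk].
  - intros w H1 H2. apply in_map_iff in H1, H2. destruct H1 as [u [<- _]]. destruct H2 as [v [E _]]. discriminate.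
Qed.

Lemma allw_bool_len k : length (allw [true; false] k) = (2 ^ k)%nat.
Proof.
  induction k; simpl; [reflexivity|]. rewrite app_nil_r, length_app, !length_map, IHk. lia.
Qed.

Lemma allw_bool_all w : In w (allw [true; false] (length w)).
Proof. apply allw_in. intros [|] _; simpl; auto. Qed.

Lemma penum_len d L js k :
  (length (penum d L js k) <= (length js * S (length L) * S k) ^ k)%nat.
Proof.
  induction k.
  - simpl. lia.
  - cbn [penum]. eapply Nat.le_trans.
    { apply (flat_map_len _ _ (S k * (length js * S (length L)))). intros Q _.
      eapply Nat.le_trans. { apply (flat_map_len _ _ (length js * S (length L))). intros p _.
        eapply Nat.le_trans. { apply (flat_map_len _ _ (S (length L))). intros J _.
          rewrite length_map. unfold thr. simpl. rewrite length_map. apply le_n. }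
        lia. }
      rewrite length_seq. lia. }
    set (a := (length js * S (length L))%nat) in *.
    eapply Nat.le_trans. { apply Nat.mul_le_mono_r. exact IHk. }
    replace ((a * S k) ^ k * (S k * a))%nat with ((a * S k) ^ S k)%nat by (simpl; lia).
    apply Nat.pow_le_mono_l. nia.
Qed.

Definition dec d L (Q : list (list bool)) (os : list (option R)) : list bool :=
  map (fun i => existsb (fun ro : list bool * option R =>
         nth i (fst ro) false && lepat (snd ro) (snd (nth i L (p0 d)))) (combine Q os))
      (seq 0 (length L)).

Definition ythr d (L : list (pt d * R)) : list (option R) := None :: map (fun q => Some (snd q)) L.

Definition codes d L js t :=
  flat_map (fun Q => map (dec d L Q) (allw (ythr d L) t)) (penum d L js (pred t)).

Lemma codes_len d L js t :
  (length (codes d L js t) <= (length js * S (length L) * S (pred t)) ^ pred t * S (length L) ^ t)%nat.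
Proof.
  unfold codes. eapply Nat.le_trans.
  { apply (flat_map_len _ _ (S (length L) ^ t)). intros Q _. rewrite length_map.
    eapply Nat.le_trans; [apply allw_len|]. unfold ythr. simpl. rewrite length_map. apply le_n. }
  apply Nat.mul_le_mono_r. apply penum_len.
Qed.

Lemma key_os d L P c : length P = length c ->
  exists os, length os = length c /\ (forall o, In o os -> In o (ythr d L)) /\
  forall i, (i < length L)%nat ->
    existsb (fun Ca : cell d * R => mem d (fst Ca) (xi d L i) && Rltb (snd (nth i L (p0 d))) (snd Ca)) (combine P c)
    = existsb (fun ro : list bool * option R =>
         nth i (fst ro) false && lepat (snd ro) (snd (nth i L (p0 d)))) (combine (map (Rc d L) P) os).
Proof.
  revert c; induction P as [|C P IH]; intros c Hl.
  - destruct c; [|discriminate]. exists []. split; [reflexivity|]. split; [intros _ []|]. reflexivity.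
  - destruct c as [|a c]; [discriminate|]. simpl in Hl. injection Hl as Hl.
    destruct (IH c Hl) as [os [H1 [H2 H3]]].
    destruct (thr_exists (fun v => v < a) (fun v w h1 h2 => Rle_lt_trans _ _ _ h1 h2) (map snd L))
      as [o [Ho HL]].
    exists (o :: os). split; [simpl; congruence|]. split.
    + intros o' [<-|Ho']; [|apply H2; exact Ho'].
      unfold ythr. destruct Ho as [->|[b [-> Hb]]]; [left; reflexivity| right].
      apply in_map_iff in Hb. destruct Hb as [q [<- Hq]].
      apply (in_map (fun q : pt d * R => Some (snd q))). exact Hq.
    + intros i Hi. simpl. rewrite (H3 i Hi). f_equal. f_equal.
      * unfold Rc. rewrite nth_map_seq by exact Hi. reflexivity.
      * apply Bool.eq_iff_eq_true. unfold Rltb. rewrite <- HL.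
        -- destruct (Rlt_dec (snd (nth i L (p0 d))) a); split; intro; try reflexivity; try discriminate; lra.
        -- apply in_map. apply nth_In. exact Hi.
Qed.

Lemma main_comb d L js t : NoDup L -> (forall p, In p L -> unit_cube d (fst p)) ->
  shatters d (G d t) L -> (forall J, In J js) ->
  forall b, length b = length L -> In b (codes d L js t).
Proof.
  intros HN Hcube Hsh Hjs b Hb.
  destruct (Hsh (fun p => exists i, (i < length L)%nat /\ nth i L (p0 d) = p /\ nth i b false = true))
    as [f [[P [c [[HP HPl] [Hc ->]]]] HT]].
  unfold codes. apply in_flat_map. exists (map (Rc d L) P). split.
  { rewrite <- HPl. apply mondrian_penum; assumption. }
  destruct (key_os d L P c) as [os [Ho1 [Ho2 Ho3]]]; [congruence|].
  apply in_map_iff. exists os. split.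
  2:{ rewrite <- Hc, <- Ho1. apply allw_in. exact Ho2. }
  apply nth_ext with (d := false) (d' := false).
  { unfold dec. rewrite length_map, length_seq. congruence. }
  intros i Hi. unfold dec in Hi. rewrite length_map, length_seq in Hi.
  unfold dec. rewrite nth_map_seq by exact Hi. rewrite <- (Ho3 i Hi).
  apply Bool.eq_iff_eq_true. rewrite <- pcsum_cnt1.
  - rewrite <- (HT (nth i L (p0 d))) by (apply nth_In; exact Hi). split.
    + intros [j [Hj [E Hbj]]].
      assert (j = i) as ->. { apply (proj1 (NoDup_nth L (p0 d)) HN); assumption. }
      exact Hbj.
    + intro H. exists i. split; [exact Hi|]. split; [reflexivity| exact H].
  - congruence.
  - apply (mondrian_cnt d P HP). apply Hcube. apply nth_In. exact Hi.
Qed.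

Lemma ln_le' x y : 0 < x -> x <= y -> ln x <= ln y.
Proof. intros Hx [H|H]; [left; apply ln_increasing; assumption| subst; lra]. Qed.

Lemma ln_le_x x : 0 < x -> ln x <= x.
Proof. intro Hx. pose proof (exp_ineq1_le (ln x)). rewrite exp_ln in H by exact Hx. lra. Qed.

Lemma real_bound (d : nat) : (1 <= d)%nat -> exists c, 0 < c /\
  forall t n : nat, (2 <= t)%nat -> (2 ^ n <= (d * t * S n * S n) ^ t)%nat ->
    INR n <= c * INR t * ln (INR t).
Proof.
  intro Hd. set (Ld := ln (INR d)). set (L16 := ln 16).
  assert (HLd : 0 <= Ld). { unfold Ld. rewrite <- ln_1. apply ln_le'; [lra|]. apply (le_INR 1). exact Hd. }
  assert (HL16 : 0 <= L16). { unfold L16. rewrite <- ln_1. apply ln_le'; lra. }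
  pose proof ln_lt_2 as Hl2.
  exists (8/3 * (2 * Ld + 4 * L16 + 4)). split; [lra|].
  intros t n Ht H.
  apply le_INR in H. rewrite !pow_INR, !mult_INR in H. rewrite !(S_INR n) in H. replace (INR 2) with 2 in H by (simpl; lra).
  set (T := INR t) in *. set (N := INR n) in *. set (D := INR d) in *.
  assert (HT : 2 <= T) by (unfold T; apply (le_INR 2); exact Ht).
  assert (HN : 0 <= N) by apply pos_INR.
  assert (HD : 1 <= D) by (unfold D; apply (le_INR 1); exact Hd).
  apply ln_le' in H; [|apply pow_lt; lra].
  assert (P1 : 0 < D * T) by nra. assert (P2 : 0 < D * T * (N + 1)) by nra.
  assert (P3 : 0 < D * T * (N + 1) * (N + 1)) by nra.
  rewrite ln_pow in H by lra. rewrite ln_pow in H by exact P3. fold N T in H.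
  rewrite (ln_mult _ (N+1)) in H by lra. rewrite (ln_mult _ (N+1)) in H by lra.
  rewrite (ln_mult D T) in H by lra. fold Ld in H.
  set (Lt := ln T) in *. set (Ln := ln (N + 1)) in *.
  assert (HLt : ln 2 <= Lt) by (apply ln_le'; lra).
  assert (HLn : Ln <= L16 + Lt + (N + 1) / (16 * T)).
  { unfold Ln. replace (N + 1) with ((16 * T) * ((N + 1) / (16 * T))) at 1 by (field; lra).
    rewrite ln_mult by (try apply Rdiv_lt_0_compat; lra).
    rewrite ln_mult by lra. fold L16 Lt.
    pose proof (ln_le_x ((N + 1) / (16 * T))) as Hx.
    assert (0 < (N + 1) / (16 * T)) by (apply Rdiv_lt_0_compat; lra). lra. }
  assert (E : T * ((N + 1) / (16 * T)) = (N + 1) / 16) by (field; lra).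
  assert (H2 : N * ln 2 <= T * (Ld + Lt + 2 * Ln)).
  { lra. }
  assert (H3 : T * Ln <= T * L16 + T * Lt + (N + 1) / 16).
  { rewrite <- E. replace (T * L16 + T * Lt + T * ((N + 1) / (16 * T))) with
      (T * (L16 + Lt + (N + 1) / (16 * T))) by ring. apply Rmult_le_compat_l; lra. }
  assert (H4 : N / 2 <= N * ln 2) by nra.
  assert (H5 : T <= 2 * (T * Lt)) by nra.
  assert (H6 : 1/8 <= T * Lt) by nra.
  assert (H7 : 0 <= T * Ld) by nra.
  assert (H8 : T * Ld <= (T * Lt) * (2 * Ld)) by nra.
  assert (H9 : T * L16 <= (T * Lt) * (2 * L16)) by nra.
  assert (H10 : 3 / 8 * N <= T * Ld + 3 * (T * Lt) + 2 * (T * L16) + 1/8) by nra.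
  nra.
Qed.

Lemma allw_length {X} (A : list X) k w : In w (allw A k) -> length w = k.
Proof.
  revert w; induction k; intros w H; simpl in H.
  - destruct H as [<-|[]]; reflexivity.
  - apply in_flat_map in H. destruct H as [a [_ H]]. apply in_map_iff in H.
    destruct H as [u [<- Hu]]. simpl. f_equal. apply IHk. exact Hu.
Qed.

Lemma nat_bound d n t : (1 <= d)%nat -> (1 <= t)%nat ->
  ((d * S n * S (pred t)) ^ pred t * S n ^ t <= (d * t * S n * S n) ^ t)%nat.
Proof.
  intros Hd Ht. replace (S (pred t)) with t by lia.
  set (a := (d * S n * t)%nat).
  assert (Ha : (1 <= a)%nat) by (unfold a; nia).
  eapply Nat.le_trans. { apply Nat.mul_le_mono_r. apply (Nat.pow_le_mono_r a (pred t) t); lia. }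
  rewrite <- Nat.pow_mul_l. apply Nat.pow_le_mono_l. unfold a. nia.
Qed.

Lemma count_bound d (L : list (pt d * R)) (js : list (fintype.ordinal d)) t : (forall J, In J js) -> length js = d -> (1 <= d)%nat -> (1 <= t)%nat ->
  NoDup L -> (forall p, In p L -> unit_cube d (fst p)) -> shatters d (G d t) L ->
  (2 ^ length L <= (d * t * S (length L) * S (length L)) ^ t)%nat.
Proof.
  intros Hjs Hjl Hd Ht HN Hc Hs.
  rewrite <- allw_bool_len.
  eapply Nat.le_trans.
  { apply NoDup_incl_length; [apply allw_bool_nodup|].
    intros b Hb. apply (main_comb d L js t HN Hc Hs Hjs). apply allw_length in Hb. exact Hb. }
  eapply Nat.le_trans; [apply codes_len|]. rewrite Hjl. apply nat_bound; assumption.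
Qed.

From mathcomp Require Import ssreflect ssrbool ssrnat eqtype seq fintype.

Lemma In_of_mem (T : eqType) (x : T) (s : list T) : x \in s -> List.In x s.
Proof.
  elim: s => [|a s IH] //=. rewrite in_cons => /orP [/eqP ->|H]; [by left|right; exact: IH].
Qed.

Lemma size_len {T} (s : list T) : size s = List.length s.
Proof. by elim: s => //= a s ->. Qed.

Theorem lemmaA6 :
  forall d : nat, (1 <= d)%N ->
  exists c : R, 0 < c /\
    forall t : nat, (2 <= t)%N ->
      VC_le d (G d t) (c * INR t * ln (INR t)).
Proof.
  move=> d Hd.
  have Hd' : (1 <= d)%coq_nat by apply/leP.
  have [c [Hc Hb]] := real_bound d Hd'.
  exists c; split => //.
  move=> t Ht L HN Hcube Hsh.
  have Ht' : (2 <= t)%coq_nat by apply/leP.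
  apply: Hb => //.
  apply: (count_bound d L (enum 'I_d)) => //.
  - move=> J. apply: In_of_mem. by rewrite mem_enum.
  - by rewrite -size_len size_enum_ord.
  - by apply/leP; apply: leq_trans Ht.
Qed.
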